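(* Let $G$ be a finite claw-free graph. Then its modular decomposition tree $T(G)$ has at most 5 layers, i.e. every path from the root to a leaf contains at most 5 nodes (the root being in layer 1).
   Context: A claw is an induced subgraph isomorphic to $K_{1,3}$. A module of $G=(V,E)$ is a set $M\subseteq V$ such that every vertex outside $M$ is adjacent either to all or to none of $M$. A graph is prime if it has at least 4 vertices and only the modules $\emptyset$, singletons and $V$. Modular decomposition (Gallai): exactly one holds: (single) $G$ is one vertex; (parallel) $G$ is disconnected; (serial) the complement of $G$ is disconnected; (prime) $G$ and its complement are connected, $|V|\ge4$, and the maximal proper modules partition $V$ into $P$ with $G/P$ prime. The tree $T(G)$ is defined recursively: single case a leaf; parallel case a root labelled ''parallel'' with children $T(G[C])$ for the connected components $C$ of $G$; serial case a root labelled ''serial'' with children $T(G[C])$ for the connected components $C$ of the complement; prime case a root labelled ''prime'' with children $T(G[M])$, $M\in P$. *)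

(* Defs.v *)
(* Finite simple graph: T : finType, e : rel T symmetric, irreflexive. *)
From mathcomp Require Import all_boot.
Set Implicit Arguments. Unset Strict Implicit. Unset Printing Implicit Defensive.

Section Graphs.
Variable T : finType.

Definition claw_free (e : rel T) : Prop :=
  ~ exists a b c d : T,
      [/\ e a b, e a c, e a d,
          [&& b != c, b != d & c != d] &
          [&& ~~ e b c, ~~ e b d & ~~ e c d]].

Definition compl_rel (e : rel T) : rel T := fun x y => (x != y) && ~~ e x y.

Definition induced (e : rel T) (S : {set T}) : rel T :=
  fun x y => [&& x \in S, y \in S & e x y].

Definition connected_in (e : rel T) (S : {set T}) : bool :=
  [forall x in S, forall y in S, connect (induced e S) x y].

Definition component_of (e : rel T) (S C : {set T}) : Prop :=
  exists2 x, x \in S & C = [set y in S | connect (induced e S) x y].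

Definition module_of (e : rel T) (S M : {set T}) : Prop :=
  M \subset S /\
  forall v, v \in S :\: M ->
    (forall m, m \in M -> e v m) \/ (forall m, m \in M -> ~~ e v m).

Definition max_proper_module (e : rel T) (S M : {set T}) : Prop :=
  [/\ module_of e S M, M != set0, M \proper S &
      forall M', module_of e S M' -> M \proper M' -> ~ M' \proper S].

(* md_depth_le e n S : the modular decomposition tree T(G[S]) has at most
   n layers (root in layer 1, a single-vertex graph has one layer). The four
   cases follow Gallai's theorem: single / parallel / serial / prime. *)
Fixpoint md_depth_le (e : rel T) (n : nat) (S : {set T}) : Prop :=
  match n with
  | 0 => False
  | n'.+1 =>
    if #|S| == 1 then True
    else if ~~ connected_in e S then
      forall C, component_of e S C -> md_depth_le e n' C
    else if ~~ connected_in (compl_rel e) S then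
      forall C, component_of (compl_rel e) S C -> md_depth_le e n' C
    else
      forall M, max_proper_module e S M -> md_depth_le e n' M
  end.

End Graphs.

(* Main.v *)
Require Import Defs.
From mathcomp Require Import all_boot.
Set Implicit Arguments. Unset Strict Implicit. Unset Printing Implicit Defensive.

Section Aux.
Variable T : finType.

Lemma induced_sym (r : rel T) S : symmetric r -> symmetric (induced r S).
Proof.
move=> rs x y; rewrite /induced rs.
by case: (x \in S); case: (y \in S).
Qed.

Lemma compl_sym (e : rel T) : symmetric e -> symmetric (compl_rel e).
Proof. by move=> es x y; rewrite /compl_rel es eq_sym. Qed.

Lemma conn_sym (r : rel T) S : symmetric r ->
  connect_sym (induced r S).
Proof. by move=> rs; apply: sym_connect_sym; apply: induced_sym. Qed.

Lemma conn_noedge (r : rel T) x y :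
  (forall a b, ~~ r a b) -> connect r x y -> x = y.
Proof.
move=> H /connectP[[|z p] /= Hp ->] //.
by move: Hp; rewrite (negbTE (H x z)).
Qed.

Lemma conn_get (r : rel T) S x y : connected_in r S -> x \in S -> y \in S ->
  connect (induced r S) x y.
Proof. by move=> /forall_inP/(_ x) H Hx Hy; move/forall_inP: (H Hx); apply. Qed.

Lemma comp_connected (r : rel T) S C : symmetric r ->
  component_of r S C -> connected_in r C.
Proof.
move=> rs [x0 Hx0 ->].
set C' := [set y in S | connect (induced r S) x0 y].
have key : forall p x, x \in C' -> path (induced r S) x p ->
    connect (induced r C') x (last x p).
  elim=> [|z p IH] x Hx /=; first by rewrite connect0.
  case/andP=> Hxz Hp.
  have Hz : z \in C'.
    move: Hx (Hxz); rewrite !inE => /andP[_ H1] /and3P[_ Hz _].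
    by rewrite Hz /=; apply: connect_trans H1 (connect1 Hxz).
  apply: connect_trans (IH z Hz Hp); apply: connect1.
  by move: Hxz; rewrite /induced Hx Hz => /and3P[].
have H0 : forall y, y \in C' -> connect (induced r C') x0 y.
  move=> y Hy; move: (Hy); rewrite inE => /andP[_ /connectP[p Hp ->]].
  apply: key Hp; by rewrite inE Hx0 connect0.
apply/forall_inP => x Hx; apply/forall_inP => y Hy.
apply: connect_trans (H0 y Hy).
by rewrite (conn_sym _ rs) H0.
Qed.

Lemma depth_mono (e : rel T) n S : md_depth_le e n S -> md_depth_le e n.+1 S.
Proof.
elim: n S => [//|n IH] S /=.
case: (#|S| == 1) => //.
case: (connected_in e S) => /=; last by move=> H C HC; apply: IH; apply: H.
case: (connected_in (compl_rel e) S) => /= H M HM; apply: IH; exact: H.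
Qed.

End Aux.

Lemma conn_closed (T : finType) (r : rel T) (Y : {set T}) x y :
  (forall a b, r a b -> a \in Y -> b \in Y) -> x \in Y -> connect r x y -> y \in Y.
Proof.
move=> H Hx /connectP[p Hp ->]; elim: p x Hx Hp => //= z p IH x Hx /andP[Hxz Hp].
exact: IH (H _ _ Hxz Hx) Hp.
Qed.

Section Main.
Variable T : finType.
Variable e : rel T.
Hypothesis es : symmetric e.
Hypothesis cf : claw_free e.

Definition clique (S : {set T}) := forall x y, x \in S -> y \in S -> x != y -> e x y.
Definition hasdom (S : {set T}) := exists v, forall s, s \in S -> e v s.

Lemma clique_depth S : clique S -> md_depth_le e 2 S.
Proof.
move=> HS /=; case: ifP => // H1.
have Hc : connected_in e S.
  apply/forall_inP => x Hx; apply/forall_inP => y Hy.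
  case: (eqVneq x y) => [->|nxy]; first exact: connect0.
  by apply: connect1; rewrite /induced Hx Hy HS.
have noedge : forall a b, ~~ induced (compl_rel e) S a b.
  move=> a b; rewrite /induced /compl_rel.
  case: (boolP (a \in S)) => //= Ha; case: (boolP (b \in S)) => //= Hb.
  by case: (eqVneq a b) => //= nab; rewrite HS.
rewrite Hc /=; case: ifP.
  move=> _ C [x Hx ->].
  have -> : [set y in S | connect (induced (compl_rel e) S) x y] = [set x].
    apply/setP => y; rewrite !inE; apply/andP/eqP => [[_ /(conn_noedge noedge) ->] //|->].
    by rewrite Hx connect0.
  by rewrite /= cards1.
move=> /negbFE Hcc M [[HMS _] HM0 HMp _].
case/set0Pn: HM0 => m Hm; case/properP: HMp => _ [z Hz HzM].
have Hms : m \in S by apply: (subsetP HMS).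
have := conn_noedge noedge (conn_get Hcc Hms Hz).
by move=> Emz; move: Hm; rewrite Emz (negbTE HzM).
Qed.

Lemma prime_clique S M : connected_in e S -> connected_in (compl_rel e) S ->
  module_of e S M -> M \proper S -> clique M.
Proof.
move=> Hc Hcc [HMS Hmod] HMp b c Hb Hc' nbc.
apply/negPn/negP => nebc.
have HbS : b \in S by apply: (subsetP HMS).
set A := [set x in S :\: M | [forall m in M, e x m]].
have inA : forall x, x \in A -> forall m, m \in M -> e x m.
  by move=> x; rewrite inE => /andP[_ /forall_inP].
have notA : forall x, x \in S :\: M -> x \notin A -> forall m, m \in M -> ~~ e x m.
  move=> x Hx HxA; case: (Hmod x Hx) => // H.
  by move: HxA; rewrite inE Hx /=; move/forall_inPn => [m Hm /negP []]; apply: H.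
case: (boolP [exists u in A, exists w in (S :\: M) :\: A, e u w]).
  case/exists_inP => u Hu /exists_inP [w Hw Huw].
  move: Hw; rewrite inE => /andP[HwA HwSM].
  have HwM : w \notin M by move: HwSM; rewrite inE => /andP[].
  apply: cf; exists u, b, c, w; split.
  - exact: inA.
  - exact: inA.
  - exact: Huw.
  - rewrite nbc /=; apply/andP; split.
      by apply/eqP => E; move: HwM; rewrite -E Hb.
    by apply/eqP => E; move: HwM; rewrite -E Hc'.
  - rewrite nebc /= es (notA w HwSM HwA b Hb) /= es.
    exact: notA w HwSM HwA c Hc'.
move=> Hno.
have allA : forall z, z \in S -> z \in M :|: A.
  move=> z Hz; apply: (conn_closed (x := b)); last exact: conn_get Hc HbS Hz.
    move=> a a' /and3P[Ha Ha' Eaa'] HaY.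
    case: (boolP (a' \in M)) => [H|Ha'M]; first by rewrite inE H.
    have Ha'SM : a' \in S :\: M by rewrite inE Ha'M Ha'.
    case: (boolP (a' \in A)) => [H|Ha'A]; first by rewrite inE H orbT.
    move: HaY; rewrite inE; case/orP => HaMA.
      by move: (notA a' Ha'SM Ha'A a HaMA); rewrite es Eaa'.
    case/negP: Hno; apply/exists_inP; exists a => //; apply/exists_inP; exists a' => //.
    by rewrite inE Ha'A.
  by rewrite inE Hb.
case/properP: HMp => _ [z Hz HzM].
case/negP: HzM; apply: (conn_closed (x := b) _ Hb (conn_get Hcc HbS Hz)).
move=> a a' /and3P[Ha Ha' /andP[_ Eaa']] HaM.
apply/negPn/negP => Ha'M.
have : a' \in M :|: A by apply: allA.
rewrite inE (negbTE Ha'M) /= => Ha'A.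
by move: (inA a' Ha'A a HaM); rewrite es (negbTE Eaa').
Qed.

Lemma par_clique S C : hasdom S -> ~~ connected_in e S -> component_of e S C -> clique C.
Proof.
move=> [v Hv] Hnc [x0 Hx0 ->] b c.
rewrite !inE => /andP[HbS Hb] /andP[HcS Hc] nbc.
apply/negPn/negP => nebc.
have cs := conn_sym S es.
set cn := connect (induced e S) in Hb Hc *.
have cbc : cn b c by apply: connect_trans Hc; rewrite /cn cs.
move/forall_inPn: Hnc => [x Hx /forall_inPn [y Hy Hxy]].
have [d HdS Hbd] : exists2 d, d \in S & ~~ cn b d.
  case: (boolP (cn b x)) => Hbx; last by exists x.
  exists y => //; apply/negP => Hby; case/negP: Hxy.
  by apply: connect_trans Hby; rewrite cs.
apply: cf; exists v, b, c, d; split; try exact: Hv.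
- rewrite nbc /=; apply/andP; split.
    by apply/eqP => E; move: Hbd; rewrite -E /cn connect0.
  by apply/eqP => E; move: Hbd; rewrite -E cbc.
- rewrite nebc /=; apply/andP; split.
    by apply/negP => Ebd; case/negP: Hbd; apply: connect1; rewrite /induced HbS HdS.
  apply/negP => Ecd; case/negP: Hbd; apply: connect_trans cbc _.
  by apply: connect1; rewrite /induced HcS HdS.
Qed.

Lemma dom_depth D : hasdom D -> connected_in (compl_rel e) D -> md_depth_le e 3 D.
Proof.
move=> Hd Hcc /=; case: ifP => // _.
case: (boolP (connected_in e D)) => /= Hc.
  rewrite Hcc /= => M [[HMS Hmod] _ HMp _]; change (md_depth_le e 2 M).
  by apply: clique_depth; apply: (prime_clique Hc Hcc).
by move=> C HC; change (md_depth_le e 2 C); apply: clique_depth; apply: (par_clique Hd Hc HC).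
Qed.

Lemma cocomp_dom C D : ~~ connected_in (compl_rel e) C ->
  component_of (compl_rel e) C D -> hasdom D /\ connected_in (compl_rel e) D.
Proof.
move=> Hnc HD; split; last exact: (comp_connected (compl_sym es) HD).
case: HD => x0 Hx0 ->.
have cs := conn_sym C (compl_sym es).
set cn := connect (induced (compl_rel e) C).
move/forall_inPn: Hnc => [x Hx /forall_inPn [y Hy Hxy]].
have [v HvC Hv] : exists2 v, v \in C & ~~ cn x0 v.
  case: (boolP (cn x0 x)) => Hbx; last by exists x.
  exists y => //; apply/negP => Hby; case/negP: Hxy.
  by apply: connect_trans Hby; rewrite cs.
exists v => s; rewrite inE => /andP[HsC Hs].
apply/negPn/negP => nvs; case/negP: (Hv).
apply: (connect_trans Hs); apply: connect1.
rewrite /induced HsC HvC /compl_rel es nvs andbT /=.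
by apply/eqP => E; move: Hv; rewrite -E Hs.
Qed.

Lemma conn_depth C : connected_in e C -> md_depth_le e 4 C.
Proof.
move=> Hc /=; case: ifP => // _; rewrite Hc /=.
case: (boolP (connected_in (compl_rel e) C)) => /= Hcc.
  move=> M [[HMS Hmod] _ HMp _]; change (md_depth_le e 3 M).
  by do 1 apply: depth_mono; apply: clique_depth; apply: (prime_clique Hc Hcc).
move=> D HD; change (md_depth_le e 3 D); case: (cocomp_dom Hcc HD) => H1 H2; exact: dom_depth.
Qed.

End Main.

Theorem corollary3 (T : finType) (e : rel T) :
  symmetric e -> irreflexive e -> 0 < #|T| -> claw_free e ->
  md_depth_le e 5 [set: T].
Proof.
move=> es _ _ cf /=; case: ifP => // _.
case: (boolP (connected_in e [set: T])) => /= Hc.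
  case: (boolP (connected_in (compl_rel e) [set: T])) => /= Hcc.
    move=> M [[HMS Hmod] _ HMp _]; change (md_depth_le e 4 M).
    by do 2 apply: depth_mono; apply: clique_depth; apply: (prime_clique es cf Hc Hcc).
  move=> D HD; change (md_depth_le e 4 D); case: (cocomp_dom es Hcc HD) => H1 H2.
  by apply: depth_mono; apply: dom_depth.
move=> C HC; change (md_depth_le e 4 C); apply: conn_depth => //; exact: (comp_connected es HC).
Qed.
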